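(* Let $R\to R'$ be a homomorphism of commutative Noetherian $\mathbb{Z}[\frac1p,\zeta_p]$-algebras and let $(\rho,V)$ be an $R[G_n]$-module of $\psi$-Whittaker type. Then $(\rho\otimes_RR',V\otimes_RR')$ is of $\psi$-Whittaker type and $\mathcal{W}(V\otimes_RR',\psi_{R'})=\mathcal{W}(V,\psi_R)\otimes_RR'$, i.e. the Whittaker model of $V\otimes_RR'$ is the image of $\mathcal{W}(V,\psi_R)\otimes_RR'$ under the natural identification $\mathrm{Ind}_{N_n}^{G_n}\psi_R\otimes_RR'\cong\mathrm{Ind}_{N_n}^{G_n}\psi_{R'}$.
   Context: Let $p$ be a prime, $q$ a power of $p$, $G_n=\mathrm{GL}_n(\mathbb{F}_q)$, $N_n$ the upper unipotent subgroup. Fix nontrivial $\psi:(\mathbb{F}_q,+)\to\mathbb{Z}[\frac1p,\zeta_p]^\times$; for an algebra $R$, $\psi_R$ is its image in $R^\times$, a character of $N_n$ via $u\mapsto\psi_R(\sum_iu_{i,i+1})$. $\mathrm{Ind}_{N_n}^{G_n}\psi_R=\{f:G_n\to R:f(ug)=\psi_R(u)f(g)\}$. An $R[G_n]$-module $V$ is of $\psi$-Whittaker type if its $(N_n,\psi_R)$-coinvariants $V_{N_n,\psi_R}$ (its $n$-th derivative) form a free $R$-module of rank one; then a generator $\lambda$ of $\mathrm{Hom}_R(V_{N_n,\psi_R},R)$ gives $V\to\mathrm{Ind}_{N_n}^{G_n}\psi_R$, $v\mapsto(g\mapsto\lambda(\overline{gv}))$, whose image (independent of $\lambda$) is the Whittaker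 model $\mathcal{W}(V,\psi_R)$. *)

(* Defs.v *)
From HB Require Import structures.
From mathcomp Require Import all_boot all_order all_algebra all_fingroup all_field.
From mathcomp Require Import boolp.
Set Implicit Arguments. Unset Strict Implicit. Unset Printing Implicit Defensive.
Import GRing.Theory.
Local Open Scope ring_scope.

(* The coefficient ring Z[1/p, zeta_p], as the smallest subring of the *)
(* algebraic complex numbers containing 1/p and a primitive p-th root   *)
(* of unity zeta_p.                                                     *)

Definition zeta_p (p : nat) : algC := sval (C_prim_root_exists (ltn0Sn p.-1)).

Definition subring_Prop (S : algC -> Prop) : Prop :=
  [/\ S 1, (forall x y, S x -> S y -> S (x - y)) & (forall x y, S x -> S y -> S (x * y))].

Definition Zpz_pred (p : nat) : pred algC := fun x =>
  `[< forall S : algC -> Prop, subring_Prop S -> S (p%:R^-1) -> S (zeta_p p) -> S x >].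

Lemma Zpz_subring_closed (p : nat) : GRing.subring_closed (Zpz_pred p).
Proof.
split.
- by apply/asboolP => S [S1 _ _].
- move=> x y /asboolP Hx /asboolP Hy; apply/asboolP => S HS Sp Sz.
  by case: HS (HS) => _ HB _ HS; apply: HB; [apply: Hx|apply: Hy].
- move=> x y /asboolP Hx /asboolP Hy; apply/asboolP => S HS Sp Sz.
  by case: HS (HS) => _ _ HM HS; apply: HM; [apply: Hx|apply: Hy].
Qed.

HB.instance Definition _ (p : nat) :=
  GRing.isSubringClosed.Build algC (Zpz_pred p) (Zpz_subring_closed p).

Record Zpz (p : nat) := MkZpz { zpz_val :> algC; _ : zpz_val \in Zpz_pred p }.

HB.instance Definition _ (p : nat) := [isSub for @zpz_val p].
HB.instance Definition _ (p : nat) := [Choice of Zpz p by <:].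
HB.instance Definition _ (p : nat) := [SubChoice_isSubComNzRing of Zpz p by <:].

Definition ideal_Prop (R : comPzRingType) (I : R -> Prop) : Prop :=
  [/\ I 0, (forall x y, I x -> I y -> I (x + y)) & (forall r x, I x -> I (r * x))].

Definition noetherian (R : comPzRingType) : Prop :=
  forall I : R -> Prop, ideal_Prop I ->
    exists (k : nat) (gen : 'I_k -> R),
      forall x, I x <-> exists c : 'I_k -> R, x = \sum_(i < k) c i * gen i.

Definition additive_char (F : finFieldType) (A : pzRingType) (psi : F -> A) : Prop :=
  psi 0 = 1 /\ forall a b, psi (a + b) = psi a * psi b.

Definition psi_ring (p : nat) (F : finFieldType) (R : comPzRingType)
  (phiR : {rmorphism Zpz p -> R}) (psi : F -> Zpz p) : F -> R :=
  fun a => phiR (psi a).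

(* G_n = GL_n(F) with n = m.+1 >= 1; N_n = upper unipotent matrices. *)
Definition upper_unipotent (F : finFieldType) (m : nat) (u : {'GL_m.+1[F]}) : bool :=
  [forall i : 'I_m.+1, forall j : 'I_m.+1,
     ((j < i)%N ==> (GLval u i j == 0)) && ((i == j) ==> (GLval u i j == 1))].

Definition psiN (F : finFieldType) (m : nat) (R : comPzRingType) (psiR : F -> R)
  (u : {'GL_m.+1[F]}) : R :=
  psiR (\sum_(i < m.+1 | (i.+1 < m.+1)%N) GLval u i (inord i.+1)).

Definition is_rep (F : finFieldType) (m : nat) (R : comPzRingType) (V : lmodType R)
  (rho : {'GL_m.+1[F]} -> V -> V) : Prop :=
  [/\ forall g r v w, rho g (r *: v + w) = r *: rho g v + rho g w,
      forall v, rho 1%g v = v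
    & forall g h v, rho (g * h)%g v = rho g (rho h v)].

(* v lies in the R-span of { rho(u) w - psi_R(u) w : u in N_n, w in V },  *)
(* i.e. v is zero in the (N_n, psi_R)-coinvariants V_{N_n,psi_R}.         *)
Definition in_twisted_span (F : finFieldType) (m : nat) (R : comPzRingType)
  (V : lmodType R) (rho : {'GL_m.+1[F]} -> V -> V) (psiR : F -> R) (v : V) : Prop :=
  exists (k : nat) (c : 'I_k -> R) (u : 'I_k -> {'GL_m.+1[F]}) (w : 'I_k -> V),
    (forall i, upper_unipotent (u i)) /\
    v = \sum_(i < k) c i *: (rho (u i) (w i) - psiN psiR (u i) *: w i).

(* V is of psi-Whittaker type: V_{N_n,psi_R} = V / (twisted span) is a free *)
(* R-module of rank one, i.e. it has a basis element, the class of some e. *)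
Definition whittaker_type (F : finFieldType) (m : nat) (R : comPzRingType)
  (V : lmodType R) (rho : {'GL_m.+1[F]} -> V -> V) (psiR : F -> R) : Prop :=
  exists e : V, forall v : V, exists! r : R, in_twisted_span rho psiR (v - r *: e).

(* Elements of Hom_R(V_{N_n,psi_R}, R), seen as R-linear functionals on V *)
(* vanishing on the twisted span.                                          *)
Definition coinv_functional (F : finFieldType) (m : nat) (R : comPzRingType)
  (V : lmodType R) (rho : {'GL_m.+1[F]} -> V -> V) (psiR : F -> R) (lam : V -> R) : Prop :=
  (forall r v w, lam (r *: v + w) = r * lam v + lam w) /\
  (forall v, in_twisted_span rho psiR v -> lam v = 0).

Definition coinv_generator (F : finFieldType) (m : nat) (R : comPzRingType)
  (V : lmodType R) (rho : {'GL_m.+1[F]} -> V -> V) (psiR : F -> R) (lam : V -> R) : Prop :=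
  coinv_functional rho psiR lam /\
  forall mu, coinv_functional rho psiR mu -> exists c : R, forall v, mu v = c * lam v.

(* The Whittaker model W(V, psi_R) inside Ind_{N_n}^{G_n} psi_R (functions  *)
(* G_n -> R): the image of v |-> (g |-> lam (rho g v)) for a generator lam *)
(* (the image does not depend on the generator).                           *)
Definition whittaker_model (F : finFieldType) (m : nat) (R : comPzRingType)
  (V : lmodType R) (rho : {'GL_m.+1[F]} -> V -> V) (psiR : F -> R)
  (W : {'GL_m.+1[F]} -> R) : Prop :=
  exists lam, coinv_generator rho psiR lam /\
  exists v : V, forall g, W g = lam (rho g v).

Definition semilinear_along (R R' : comPzRingType) (f : R -> R') (V : lmodType R)
  (M : lmodType R') (phi : V -> M) : Prop :=
  forall r v w, phi (r *: v + w) = f r *: phi v + phi w.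

Definition R_linear (R' : comPzRingType) (V' M : lmodType R') (phi : V' -> M) : Prop :=
  forall r v w, phi (r *: v + w) = r *: phi v + phi w.

(* (V', iota) is a tensor product V ⊗_R R' with iota v = v ⊗ 1. *)
Definition is_base_change (R R' : comPzRingType) (f : R -> R') (V : lmodType R)
  (V' : lmodType R') (iota : V -> V') : Prop :=
  semilinear_along f iota /\
  forall (M : lmodType R') (phi : V -> M), semilinear_along f phi ->
    exists phi' : V' -> M,
      [/\ R_linear phi', (forall v, phi' (iota v) = phi v)
        & forall phi'' : V' -> M, R_linear phi'' ->
            (forall v, phi'' (iota v) = phi v) -> forall x, phi'' x = phi' x].

(* Main.v *)
Require Import Defs.
From HB Require Import structures.
From mathcomp Require Import all_boot all_order all_algebra all_fingroup all_field.
From mathcomp Require Import boolp.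
Set Implicit Arguments. Unset Strict Implicit. Unset Printing Implicit Defensive.
Import GRing.Theory.
Local Open Scope ring_scope.

Definition closedP (R : comPzRingType) (V : lmodType R) (Q : V -> Prop) : Prop :=
  [/\ Q 0, (forall x y, Q x -> Q y -> Q (x + y)) & (forall a x, Q x -> Q (a *: x))].

Definition spanb (R : comPzRingType) (V : lmodType R) (A : V -> Prop) : pred V :=
  fun x => `[< forall Q : V -> Prop, closedP Q -> (forall v, A v -> Q v) -> Q x >].

Lemma spanb_closed (R : comPzRingType) (V : lmodType R) (A : V -> Prop) :
  GRing.submod_closed (spanb A).
Proof.
split; first by apply/asboolP => Q [] .
move=> a x y /asboolP Hx /asboolP Hy; apply/asboolP => Q HQ HA.
case: (HQ) => _ HD HZ; apply: HD; [apply: HZ; exact: Hx|exact: Hy].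
Qed.

HB.instance Definition _ (R : comPzRingType) (V : lmodType R) (A : V -> Prop) :=
  GRing.isSubmodClosed.Build R V (spanb A) (spanb_closed A).

Record spanT (R : comPzRingType) (V : lmodType R) (A : V -> Prop) :=
  MkSpan { span_val :> V; _ : span_val \in spanb A }.

HB.instance Definition _ (R : comPzRingType) (V : lmodType R) (A : V -> Prop) :=
  [isSub for @span_val R V A].
HB.instance Definition _ (R : comPzRingType) (V : lmodType R) (A : V -> Prop) :=
  [Choice of spanT A by <:].
HB.instance Definition _ (R : comPzRingType) (V : lmodType R) (A : V -> Prop) :=
  [SubChoice_isSubLmodule of spanT A by <:].

Lemma span_valZD (R : comPzRingType) (V : lmodType R) (A : V -> Prop) a (u w : spanT A) :
  span_val (a *: u + w) = a *: span_val u + span_val w.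
Proof. by []. Qed.
Lemma span_all (R R' : comPzRingType) (f : {rmorphism R -> R'}) (V : lmodType R)
  (V' : lmodType R') (iota : V -> V') :
  is_base_change f iota -> forall Q : V' -> Prop, closedP Q -> (forall v, Q (iota v)) ->
  forall x, Q x.
Proof.
move=> [Hsl Huniv] Q HQ HA x.
pose A := fun y => exists v, y = iota v.
have Hin v : iota v \in spanb A.
  by apply/asboolP => Q' _ H; apply: H; exists v.
pose phi v : spanT A := MkSpan (Hin v).
have Hphi : semilinear_along f phi.
  by move=> r v w; apply: val_inj => /=; rewrite Hsl.
have [phi' [Hl Hc _]] := Huniv _ phi Hphi.
have [id' [_ _ Hu]] := Huniv _ iota Hsl.
have E1 y : span_val (phi' y) = id' y.
  apply: (Hu (fun y => span_val (phi' y))); last by move=> v; rewrite Hc.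
  by move=> r v w; rewrite Hl.
have E2 y : y = id' y by apply: (Hu id).
have : span_val (phi' x) \in spanb A by case: (phi' x).
rewrite E1 -E2 => /asboolP; apply => //.
by move=> y [v ->]; apply: HA.
Qed.

Section SL.
Variables (R R' : comPzRingType) (g : R -> R') (V : lmodType R) (M : lmodType R')
  (phi : V -> M).
Hypothesis g1 : g 1 = 1.
Hypothesis Hphi : semilinear_along g phi.

Lemma sl0 : phi 0 = 0.
Proof.
have := Hphi 1 0 0; rewrite scaler0 addr0 g1 scale1r => H.
by apply: (@addrI _ (phi 0)); rewrite addr0 -H.
Qed.
Lemma slD x y : phi (x + y) = phi x + phi y.
Proof. by have := Hphi 1 x y; rewrite scale1r g1 scale1r. Qed.
Lemma slZ a x : phi (a *: x) = g a *: phi x.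
Proof. by have := Hphi a x 0; rewrite addr0 sl0 addr0. Qed.
Lemma slN x : phi (- x) = - phi x.
Proof.
apply/eqP; rewrite -subr_eq0 opprK addrC -slD addrN sl0 //.
Qed.
Lemma slB x y : phi (x - y) = phi x - phi y.
Proof. by rewrite slD slN. Qed.
Lemma slsum k (x : 'I_k -> V) : phi (\sum_(i < k) x i) = \sum_(i < k) phi (x i).
Proof.
elim: k x => [|k IH] x; first by rewrite !big_ord0 sl0.
by rewrite !big_ord_recr /= slD IH.
Qed.
End SL.

Section TS.
Variables (F : finFieldType) (m : nat) (R : comPzRingType) (V : lmodType R)
  (rho : {'GL_m.+1[F]} -> V -> V) (psiR : F -> R).
Notation S := (in_twisted_span rho psiR).

Lemma ts0 : S 0.
Proof.
exists 0%N, (fun _ => 0), (fun _ => 1%g), (fun _ => 0); split; first by case.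
by rewrite big_ord0.
Qed.

Lemma tsD x y : S x -> S y -> S (x + y).
Proof.
move=> [k1 [c1 [u1 [w1 [Hu1 ->]]]]] [k2 [c2 [u2 [w2 [Hu2 ->]]]]].
exists (k1 + k2)%N.
exists (fun i => match split i with inl j => c1 j | inr j => c2 j end).
exists (fun i => match split i with inl j => u1 j | inr j => u2 j end).
exists (fun i => match split i with inl j => w1 j | inr j => w2 j end).
split; first by move=> i; case: (split i).
rewrite big_split_ord /=; congr (_ + _); apply: eq_bigr => i _.
  by rewrite (unsplitK (inl _ i)).
by rewrite (unsplitK (inr _ i)).
Qed.

Lemma tsZ a x : S x -> S (a *: x).
Proof.
move=> [k [c [u [w [Hu ->]]]]].
exists k, (fun i => a * c i), u, w; split => //.
by rewrite scaler_sumr; apply: eq_bigr => i _; rewrite scalerA.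
Qed.

Lemma tsN x : S x -> S (- x).
Proof. by move=> Hx; rewrite -scaleN1r; apply: tsZ. Qed.

Lemma tsB x y : S x -> S y -> S (x - y).
Proof. by move=> Hx Hy; apply: tsD => //; apply: tsN. Qed.

Lemma tsG u w : upper_unipotent u -> S (rho u w - psiN psiR u *: w).
Proof.
move=> Hu; exists 1%N, (fun _ => 1), (fun _ => u), (fun _ => w); split => //.
by rewrite big_ord1 scale1r.
Qed.
End TS.
Lemma ker_closed (R R' : comPzRingType) (g : R -> R') (V : lmodType R) (M : lmodType R')
  (phi : V -> M) : g 1 = 1 -> semilinear_along g phi -> closedP (fun x => phi x = 0).
Proof.
move=> g1 H; split; first exact: sl0 g1 H.
  by move=> x y Hx Hy; rewrite (slD g1 H) Hx Hy addr0.
by move=> a x Hx; rewrite (slZ g1 H) Hx scaler0.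
Qed.

Lemma sum_concat (M : nmodType) k1 k2 (F1 : 'I_k1 -> M) (F2 : 'I_k2 -> M) :
  \sum_(i < k1) F1 i + \sum_(i < k2) F2 i =
  \sum_(i < k1 + k2) match split i with inl j => F1 j | inr j => F2 j end.
Proof.
rewrite big_split_ord /=; congr (_ + _); apply: eq_bigr => i _.
  by rewrite (unsplitK (inl _ i)).
by rewrite (unsplitK (inr _ i)).
Qed.

Lemma func_decomp (F : finFieldType) (m : nat) (R : comPzRingType) (V : lmodType R)
  (rho : {'GL_m.+1[F]} -> V -> V) (psiR : F -> R) (mu lam : V -> R) (e : V) :
  coinv_functional rho psiR mu -> (forall v, in_twisted_span rho psiR (v - lam v *: e)) ->
  forall v, mu v = lam v * mu e.
Proof.
move=> [HL HS] Hl v.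
have HL' : semilinear_along (fun r : R => r) (mu : V -> R^o) := HL.
have := HS _ (Hl v).
rewrite (slB (erefl : (fun r : R => r) 1 = 1) HL') (slZ (erefl : (fun r : R => r) 1 = 1) HL').
by move/eqP; rewrite subr_eq0 => /eqP.
Qed.
Theorem lemma2p13 (p : nat) (F : finFieldType) (m : nat) (psi : F -> Zpz p)
  (R R' : comPzRingType)
  (phiR : {rmorphism Zpz p -> R}) (phiR' : {rmorphism Zpz p -> R'})
  (f : {rmorphism R -> R'})
  (V : lmodType R) (rho : {'GL_m.+1[F]} -> V -> V)
  (V' : lmodType R') (iota : V -> V') (rho' : {'GL_m.+1[F]} -> V' -> V') :
  prime p -> p \in [pchar F] ->
  additive_char psi -> (exists a, psi a != 1) ->
  noetherian R -> noetherian R' ->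
  (forall z, f (phiR z) = phiR' z) ->
  is_rep rho -> whittaker_type rho (psi_ring phiR psi) ->
  is_base_change f iota ->
  is_rep rho' -> (forall g v, rho' g (iota v) = iota (rho g v)) ->
  whittaker_type rho' (psi_ring phiR' psi) /\
  (forall W' : {'GL_m.+1[F]} -> R',
     whittaker_model rho' (psi_ring phiR' psi) W' <->
     exists (k : nat) (c : 'I_k -> R') (w : 'I_k -> {'GL_m.+1[F]} -> R),
       (forall i, whittaker_model rho (psi_ring phiR psi) (w i)) /\
       (forall g, W' g = \sum_(i < k) c i * f (w i g))).
Proof.
move=> _ _ _ _ _ _ Hf [rhoL _ _] [e He] Hbc [rhoL' _ _] Hcomm.
set psiR := psi_ring phiR psi; set psiR' := psi_ring phiR' psi.
have Hpsi u : psiN psiR' u = f (psiN psiR u) by rewrite /psiN /psiR /psiR' /psi_ring Hf.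
have id1 : (fun r : R => r) 1 = 1 by [].
have id1' : (fun r : R' => r) 1 = 1 by [].
have rL g : semilinear_along (fun r : R => r) (rho g) := rhoL g.
have rL' g : semilinear_along (fun r : R' => r) (rho' g) := rhoL' g.
have f1 : f 1 = 1 := rmorph1 f.
have iL := Hbc.1.
have Hex v : exists r, in_twisted_span rho psiR (v - r *: e).
  by case: (He v) => r [Hr _]; exists r.
pose lam v := sval (cid (Hex v)).
have lamS v : in_twisted_span rho psiR (v - lam v *: e) := svalP (cid (Hex v)).
have lamU v r : in_twisted_span rho psiR (v - r *: e) -> r = lam v.
  case: (He v) => r0 [_ Hu] Hr.
  by rewrite -(Hu _ Hr); apply: Hu; apply: lamS.
have lamL0 r v w : lam (r *: v + w) = r * lam v + lam w.
  symmetry; apply: lamU.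
  have -> : r *: v + w - (r * lam v + lam w) *: e = r *: (v - lam v *: e) + (w - lam w *: e).
    by rewrite scalerDl scalerBr scalerA opprD addrACA.
  by apply: tsD; [apply: tsZ|]; apply: lamS.
have lamL : semilinear_along (fun r : R => r) (lam : V -> R^o) := lamL0.
have lamS0 v : in_twisted_span rho psiR v -> lam v = 0.
  by move=> Hv; symmetry; apply: lamU; rewrite scale0r subr0.
have lame : lam e = 1.
  by symmetry; apply: lamU; rewrite scale1r subrr; apply: ts0.
have flamL : semilinear_along f ((fun v => f (lam v)) : V -> R'^o).
  by move=> r v w; rewrite lamL0 rmorphD rmorphM.
have [lam' [lam'L0 lam'i _]] := Hbc.2 _ _ flamL.
have lam'L : semilinear_along (fun r : R' => r) lam' := lam'L0.
have iotaS x : in_twisted_span rho psiR x -> in_twisted_span rho' psiR' (iota x).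
  move=> [k [c [u [w [Hu ->]]]]].
  exists k, (fun i => f (c i)), u, (fun i => iota (w i)); split => //.
  rewrite (slsum f1 iL); apply: eq_bigr => i _.
  by rewrite (slZ f1 iL) (slB f1 iL) (slZ f1 iL) Hcomm Hpsi.
pose e' := iota e.
have Hex' v' : exists r, in_twisted_span rho' psiR' (v' - r *: e').
  apply: (span_all Hbc (Q := fun v' => exists r, in_twisted_span rho' psiR' (v' - r *: e'))).
    split.
    - by exists 0; rewrite scale0r subr0; apply: ts0.
    - move=> x y [r1 H1] [r2 H2]; exists (r1 + r2).
      have -> : x + y - (r1 + r2) *: e' = (x - r1 *: e') + (y - r2 *: e').
        by rewrite scalerDl opprD addrACA.
      by apply: tsD.
    - move=> a x [r1 H1]; exists (a * r1).
      have -> : a *: x - (a * r1) *: e' = a *: (x - r1 *: e').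
        by rewrite scalerBr scalerA.
      by apply: tsZ.
  move=> v; exists (f (lam v)).
  by rewrite /e' -(slZ f1 iL) -(slB f1 iL); apply: iotaS.
have lam'S x : in_twisted_span rho' psiR' x -> lam' x = 0.
  move=> [k [c [u [w [Hu ->]]]]].
  rewrite (slsum id1' lam'L) big1 // => i _.
  rewrite (slZ id1' lam'L) /=.
  suff -> : lam' (rho' (u i) (w i) - psiN psiR' (u i) *: w i) = 0 by rewrite scaler0.
  move: (w i); apply: (span_all Hbc (Q := fun w => lam' (rho' (u i) w - psiN psiR' (u i) *: w) = 0)).
    apply: (ker_closed id1') => r v z.
    have -> : rho' (u i) (r *: v + z) - psiN psiR' (u i) *: (r *: v + z) =
      r *: (rho' (u i) v - psiN psiR' (u i) *: v) + (rho' (u i) z - psiN psiR' (u i) *: z).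
      by rewrite rL' scalerDr scalerBr !scalerA (mulrC r) opprD addrACA.
    by rewrite lam'L.
  move=> v; rewrite Hcomm Hpsi -(slZ f1 iL) -(slB f1 iL) lam'i lamS0 ?rmorph0 //.
  by apply: tsG.
have lam'e : lam' e' = 1 by rewrite lam'i lame rmorph1.
have lam'spec v' : in_twisted_span rho' psiR' (v' - lam' v' *: e').
  case: (Hex' v') => r Hr.
  have := lam'S _ Hr; rewrite (slB id1' lam'L) (slZ id1' lam'L) /= lam'e.
  move/eqP; rewrite subr_eq0 => /eqP H.
  have -> : lam' v' = r by rewrite H; exact: mulr1.
  exact: Hr.
have lamG : coinv_generator rho psiR lam.
  split; first exact: (conj lamL0 lamS0).
  by move=> mu Hmu; exists (mu e) => v; rewrite (func_decomp Hmu lamS) mulrC.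
have lam'G : coinv_generator rho' psiR' lam'.
  split; first exact: (conj lam'L0 lam'S).
  by move=> mu Hmu; exists (mu e') => v; rewrite (func_decomp Hmu lam'spec) mulrC.
split.
  exists e' => v'; exists (lam' v'); split; first exact: lam'spec.
  move=> r Hr; have := lam'S _ Hr.
  rewrite (slB id1' lam'L) (slZ id1' lam'L) /= lam'e => /eqP; rewrite subr_eq0 => /eqP ->.
  exact: mulr1.
move=> W'; split.
  move=> [lam0 [[Hfun _] [v' HW]]].
  have Hspan : exists k (c : 'I_k -> R') (x : 'I_k -> V), v' = \sum_(i < k) c i *: iota (x i).
    apply: (span_all Hbc (Q := fun v' => exists k (c : 'I_k -> R') (x : 'I_k -> V),
                                v' = \sum_(i < k) c i *: iota (x i))).
      split.
      - by exists 0%N, (fun _ => 0), (fun _ => 0); rewrite big_ord0.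
      - move=> _ _ [k1 [c1 [x1 ->]]] [k2 [c2 [x2 ->]]].
        exists (k1 + k2)%N, (fun i => match split i with inl j => c1 j | inr j => c2 j end).
        exists (fun i => match split i with inl j => x1 j | inr j => x2 j end).
        by rewrite sum_concat; apply: eq_bigr => i _; case: (split i).
      - move=> a _ [k [c [x ->]]]; exists k, (fun i => a * c i), x.
        by rewrite scaler_sumr; apply: eq_bigr => i _; rewrite scalerA.
    by move=> v; exists 1%N, (fun _ => 1), (fun _ => v); rewrite big_ord1 scale1r.
  case: Hspan => k [c [x Hv']].
  exists k, (fun i => c i * lam0 e'), (fun i g => lam (rho g (x i))); split.
    by move=> i; exists lam; split => //; exists (x i).
  move=> g; rewrite HW (func_decomp Hfun lam'spec) Hv' (slsum id1' (rL' g)) (slsum id1' lam'L).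
  rewrite mulr_suml; apply: eq_bigr => i _.
  rewrite (slZ id1' (rL' g)) /= (slZ id1' lam'L) /= Hcomm lam'i.
  exact: mulrAC.
move=> [k [c [w [Hw HW]]]].
have Hx i : exists x, forall g, w i g = lam (rho g x).
  case: (Hw i) => lam0 [[Hfun _] [v Hv]].
  exists (lam0 e *: v) => g; rewrite Hv (func_decomp Hfun lamS) (slZ id1 (rL g)) /= (slZ id1 lamL) /=.
  exact: mulrC.
pose x i := sval (cid (Hx i)).
have Hxs i g : w i g = lam (rho g (x i)) := svalP (cid (Hx i)) g.
exists lam'; split; first exact: lam'G.
exists (\sum_(i < k) c i *: iota (x i)) => g.
rewrite HW (slsum id1' (rL' g)) (slsum id1' lam'L); apply: eq_bigr => i _.
by rewrite (slZ id1' (rL' g)) /= (slZ id1' lam'L) /= Hcomm lam'i Hxs.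
Qed.
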